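(* Let $n\ge 2$ be an integer and $A\subseteq L_n$. If the subset $L_n$ is $z$-embedded in $(X_n,\tau(A))$, then $L_n\setminus A$ does not contain a closed uncountable subset of $(L_n,\tau_E|_{L_n})$.
   Context: For $\overline{x},\overline{a}\in\mathbb R^n$ let $|\overline{x}-\overline{a}|$ be the Euclidean distance and $B(\overline{a},\epsilon)=\{\overline{x}\in\mathbb R^n:|\overline{x}-\overline{a}|<\epsilon\}$. Let $P_n=\{\overline{x}\in\mathbb R^n: x_n>0\}$, $L_n=\{\overline{x}\in\mathbb R^n: x_n=0\}$, $X_n=P_n\cup L_n$, and let $\tau_E$ denote the Euclidean topology on $X_n$. For $\overline{a}\in L_n$ and $\epsilon>0$ put $\overline{a(\epsilon)}=(a_1,\dots,a_{n-1},\epsilon)$ and $\tilde B(\overline{a},\epsilon)=\{\overline{a}\}\cup B(\overline{a(\epsilon)},\epsilon)$. For $A\subseteq L_n$, the topology $\tau(A)$ on $X_n$ is generated by the local bases: at $\overline{a}\in P_n$, the sets $B(\overline{a},\epsilon)$ with $0<\epsilon<a_n$; at $\overline{a}\in A$, the sets $B(\overline{a},\epsilon)\cap X_n$ with $\epsilon>0$; at $\overline{a}\in L_n\setminus A$, the sets $\tilde B(\overline{a},\epsilon)$ with $\epsilon>0$. A subset $Y$ of a space $X$ is $z$-embedded in $X$ if every zero set of $Y$ is the trace on $Y$ of some zero set of $X$. *)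

(* Defs.v *)
From mathcomp Require Import all_boot all_order all_algebra.
From mathcomp Require Import classical_sets cardinality reals.
Set Implicit Arguments. Unset Strict Implicit. Unset Printing Implicit Defensive.
Import Order.TTheory GRing.Theory Num.Theory.
Local Open Scope ring_scope.
Local Open Scope classical_set_scope.

Section Defs.
Variables (R : realType) (n : nat).

(* points of R^n, coordinates indexed by 'I_n (x_1..x_n <-> indices 0..n-1) *)
Definition pt := 'I_n -> R.

Definition edist (x a : pt) : R := Num.sqrt (\sum_(i < n) (x i - a i) ^+ 2).

Definition eball (a : pt) (e : R) : set pt := [set x | edist x a < e].

(* the last coordinate x_n (the unique index i with i+1 = n) *)
Definition lastc (x : pt) : R := \sum_(i < n | i.+1 == n) x i.

Definition Pn : set pt := [set x | 0 < lastc x].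
Definition Ln : set pt := [set x | lastc x = 0].
Definition Xn : set pt := Pn `|` Ln.

Definition raise (a : pt) (e : R) : pt := fun i => if i.+1 == n then e else a i.

Definition tball (a : pt) (e : R) : set pt := [set a] `|` eball (raise a e) e.

Definition tau_basic (A : set pt) (a : pt) (U : set pt) : Prop :=
  [/\ Pn a & exists e, [/\ 0 < e, e < lastc a & U = eball a e]]
  \/ [/\ A a & exists e, 0 < e /\ U = eball a e `&` Xn]
  \/ [/\ Ln a, ~ A a & exists e, 0 < e /\ U = tball a e].

(* f : Y -> R continuous, Y ⊆ X_n carrying the subspace topology of tau(A)
   (values of f outside Y are irrelevant) *)
Definition tau_cont (A : set pt) (Y : set pt) (f : pt -> R) : Prop :=
  forall y, Y y -> forall eps, 0 < eps ->
    exists U, tau_basic A y U /\ (forall z, U z -> Y z -> `|f z - f y| < eps).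

(* Y is z-embedded in (X_n, tau(A)): every zero set of Y is the trace on Y
   of a zero set of X_n *)
Definition z_embedded (A : set pt) (Y : set pt) : Prop :=
  forall g, tau_cont A Y g ->
    exists f, tau_cont A Xn f /\ (forall y, Y y -> (f y = 0 <-> g y = 0)).

Definition closed_in_Ln (C : set pt) : Prop :=
  forall x, Ln x -> (forall e, 0 < e -> exists c, C c /\ edist c x < e) -> C x.

End Defs.

(* Main.v *)
Require Import Defs.
From mathcomp Require Import all_boot all_order all_algebra.
From mathcomp Require Import classical_sets cardinality reals boolp.
From mathcomp Require Import ring lra.
Import Order.TTheory GRing.Theory Num.Theory.
Local Open Scope ring_scope.
Local Open Scope classical_set_scope.
Set Implicit Arguments. Unset Strict Implicit. Unset Printing Implicit Defensive.

Section Geo.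
Variables (R : realType) (m : nat).
Local Notation n := m.+2.
Local Notation pt := (pt R n).

Definition sq (x a : pt) : R := \sum_(i < n) (x i - a i) ^+ 2.

Lemma sq_ge0 x a : 0 <= sq x a.
Proof. by apply: sumr_ge0 => i _; apply: sqr_ge0. Qed.

Lemma edist_ltE (x a : pt) e : 0 < e -> (edist x a < e <-> sq x a < e ^+ 2).
Proof.
move=> e0; rewrite /edist -[X in _ < X](gtr0_norm e0) -sqrtr_sqr.
by rewrite ltr_sqrt ?exprn_gt0 //.
Qed.

Lemma lastcE (x : pt) : lastc x = x ord_max.
Proof.
by rewrite /lastc (big_pred1 ord_max).
Qed.

Lemma raise_max (a : pt) e : raise a e ord_max = e.
Proof. by rewrite /raise eqxx. Qed.

Lemma raise_neq (a : pt) e i : i != ord_max -> raise a e i = a i.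
Proof.
move=> h; rewrite /raise; case: ifP => // /eqP; rewrite -[n]/(ord_max : 'I_n).+1.
by move=> [] hi; case/eqP: h; apply/val_inj.
Qed.

Lemma sq_coord (x a : pt) i : (x i - a i) ^+ 2 <= sq x a.
Proof.
rewrite /sq (bigD1 i) //= lerDl; apply: sumr_ge0 => j _; apply: sqr_ge0.
Qed.

Lemma tan_pos (y z : pt) e : 0 < e -> eball (raise y e) e z -> 0 < z ord_max.
Proof.
move=> e0; rewrite /eball /= edist_ltE // => h.
have := le_lt_trans (sq_coord _ _ ord_max) h; rewrite raise_max => h2.
case: (ltrP 0 (z ord_max)) => // hz.
have : e ^+ 2 <= (z ord_max - e) ^+ 2 by nra.
by rewrite leNgt h2.
Qed.

Lemma tan_Pn (y z : pt) e : 0 < e -> eball (raise y e) e z -> Pn z.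
Proof. by move=> e0 h; rewrite /Pn /= lastcE; apply: tan_pos h. Qed.

Lemma small_sq (k : R) : 0 < k -> exists2 d : R, 0 < d &
  forall x a : pt, (forall i, `|x i - a i| <= d) -> sq x a < k.
Proof.
move=> k0; pose N : R := n%:R.
have N0 : 0 < N by rewrite ltr0n.
pose d := Num.min 1 (k / (N + 1)).
have d0' : 0 < d by rewrite lt_min ltr01 /= divr_gt0 // addr_gt0.
have d0 : 0 <= d by apply: ltW.
have d1 : d <= 1 by rewrite ge_min lexx.
have dk : d <= k / (N + 1) by rewrite ge_min lexx orbT.
exists d => // x a h.
have : sq x a <= \sum_(i < n) d ^+ 2.
  apply: ler_sum => i _; rewrite -real_normK ?num_real //.
  by apply: lerXn2r => //; rewrite nnegrE.
rewrite sumr_const card_ord -/N => h1.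
have h2 : d * (N + 1) <= k by rewrite -ler_pdivlMr ?addr_gt0.
rewrite -mulr_natr -/N in h1.
apply: (le_lt_trans h1); nra.
Qed.


Lemma sqC (x a : pt) : sq x a = sq a x.
Proof. by apply: eq_bigr => i _; rewrite -sqrrN opprB. Qed.

Lemma sq_scale (c1 c2 : pt) t :
  sq (fun i => c1 i + t * (c2 i - c1 i)) c1 = t ^+ 2 * sq c2 c1.
Proof.
rewrite /sq mulr_sumr; apply: eq_bigr => i _; rewrite addrC addKr exprMn //.
Qed.

Lemma sq_scale2 (c1 c2 : pt) t :
  sq (fun i => c1 i + t * (c2 i - c1 i)) c2 = (1 - t) ^+ 2 * sq c2 c1.
Proof.
rewrite /sq mulr_sumr; apply: eq_bigr => i _.
rewrite -exprMn -sqrrN; congr (_ ^+ 2); ring.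
Qed.

Lemma sq_raise (a d : pt) r p : a ord_max = 0 -> d ord_max = 0 ->
  sq (raise d p) (raise a r) = (p - r) ^+ 2 + sq d a.
Proof.
move=> a0 d0; rewrite /sq (bigD1 ord_max) //= [in RHS](bigD1 ord_max) //=.
rewrite !raise_max a0 d0 subrr expr0n /= add0r; congr (_ + _).
by apply: eq_bigr => i hi; rewrite !raise_neq.
Qed.

Lemma tan_meet (a d : pt) r p : 0 < r -> 0 < p -> a ord_max = 0 ->
  d ord_max = 0 -> sq a d < 4 * r * p ->
  exists z, eball (raise a r) r z /\ eball (raise d p) p z.
Proof.
move=> r0 p0 a0 d0 h.
pose t := r / (r + p).
have rp0 : 0 < r + p by rewrite addr_gt0.
have tE : t * (r + p) = r by rewrite /t mulfVK // gt_eqF.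
have t0 : 0 < t by rewrite /t divr_gt0.
have t1E : (1 - t) * (r + p) = p by rewrite mulrBl tE mul1r addrC addKr.
clearbody t.
have S : sq (raise d p) (raise a r) < (r + p) ^+ 2.
  by rewrite sq_raise // -sqC; nra.
have S0 := sq_ge0 (raise d p) (raise a r).
exists (fun i => raise a r i + t * (raise d p i - raise a r i)); split.
  rewrite /eball /= edist_ltE // sq_scale.
  by rewrite -[X in _ < X ^+ 2]tE exprMn ltr_pM2l // exprn_gt0.
rewrite /eball /= edist_ltE // sq_scale2.
have t1 : 0 < 1 - t by rewrite -(pmulr_lgt0 _ rp0) t1E.
by rewrite -[X in _ < X ^+ 2]t1E exprMn ltr_pM2l // exprn_gt0.
Qed.

End Geo.

Lemma countableU T (X Y : set T) : countable X -> countable Y -> countable (X `|` Y).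
Proof.
move=> cX cY.
have -> : X `|` Y = \bigcup_(i in [set: bool]) (if i then X else Y).
  apply/seteqP; split=> [x [Xx|Yx]|x [[] _ h]]; [by exists true|by exists false|by left|by right].
by apply: bigcup_countable => // -[].
Qed.

Lemma archi_inv (R : realType) (e : R) : 0 < e -> exists k : nat, (k.+1%:R)^-1 < e.
Proof.
move=> e0; have := @archi_boundP _ e^-1; rewrite invr_ge0 ltW // => /(_ isT).
set N := Num.Def.archi_bound _ => hN; exists N.
rewrite invf_plt ?posrE ?ltr0n //; apply: (lt_le_trans hN).
by rewrite ler_nat.
Qed.

Section Boxes.
Variables (R : realType) (m : nat).
Local Notation n := m.+2.
Local Notation pt := (pt R n).

Definition RB := ({ffun 'I_n -> rat} * {ffun 'I_n -> rat})%type.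

Definition box (b : RB) : set pt :=
  [set x | forall i, ratr (b.1 i) <= x i <= ratr (b.2 i)].

Definition cube (d : pt) (e : R) : set pt := [set y | forall i, `|y i - d i| <= e].

Lemma ratr_max (q q' : rat) : (ratr (Num.max q q') : R) = Num.max (ratr q) (ratr q').
Proof.
case: (leP q q') => h; first by rewrite !max_r // ler_rat.
by rewrite !max_l // ler_rat ltW.
Qed.

Lemma ratr_min (q q' : rat) : (ratr (Num.min q q') : R) = Num.min (ratr q) (ratr q').
Proof.
case: (leP q q') => h; first by rewrite !min_l // ler_rat.
by rewrite !min_r // ler_rat ltW.
Qed.

Definition meet (b b' : RB) : RB :=
  ([ffun i => Num.max (b.1 i) (b'.1 i)], [ffun i => Num.min (b.2 i) (b'.2 i)]).

Lemma box_meet b b' : box (meet b b') = box b `&` box b'.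
Proof.
apply/seteqP; split => x /=.
  move=> h; split => i; have := h i; rewrite !ffunE ratr_max ratr_min.
    by rewrite ge_max le_min => /andP[/andP[-> _] /andP[-> _]].
  by rewrite ge_max le_min => /andP[/andP[_ ->] /andP[_ ->]].
move=> [h1 h2] i; rewrite !ffunE ratr_max ratr_min ge_max le_min.
by case/andP: (h1 i) => -> ->; case/andP: (h2 i) => -> ->.
Qed.

Lemma rat_window (x : pt) e : 0 < e ->
  exists b : RB, box b x /\ box b `<=` [set y | forall i, `|y i - x i| < e].
Proof.
move=> e0.
have H1 i : {q : rat | x i - e < ratr q < x i}.
  apply: cid; have [|q] := @rat_in_itvoo R (x i - e) (x i); first by rewrite ltrBlDr ltrDl.
  by rewrite in_itv /=; exists q.
have H2 i : {q : rat | x i < ratr q < x i + e}.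
  apply: cid; have [|q] := @rat_in_itvoo R (x i) (x i + e); first by rewrite ltrDl.
  by rewrite in_itv /=; exists q.
exists ([ffun i => sval (H1 i)], [ffun i => sval (H2 i)]); split.
  move=> i /=; rewrite !ffunE.
  by case: (H1 i) => q /= /andP[_ /ltW ->]; case: (H2 i) => q' /= /andP[/ltW -> _].
move=> y /= h i; have := h i; rewrite !ffunE.
case: (H1 i) => q /= /andP[h1 _]; case: (H2 i) => q' /= /andP[_ h2] /andP[h3 h4].
by rewrite ltr_norml; apply/andP; split; lra.
Qed.


Lemma cover (C W N : set pt) (b : RB) (P : RB -> Prop) :
  countable N -> ~ countable (C `&` box b `&` W) ->
  (forall x, C x -> box b x -> W x -> ~ N x ->
     exists b', [/\ box b' `<=` box b, box b' x & P b']) ->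
  exists b', [/\ box b' `<=` box b, P b' & ~ countable (C `&` box b')].
Proof.
move=> cN nc H; apply: contrapT => nE; apply: nc.
pose I := [set b' : RB | box b' `<=` box b /\ P b'].
have cI : forall b', I b' -> countable (C `&` box b').
  move=> b' [h1 h2]; apply: contrapT => h3; apply: nE; by exists b'.
apply: (@sub_countable _ _ _ (N `|` \bigcup_(b' in I) (C `&` box b'))).
  apply: subset_card_le => x [[Cx bx] Wx]; have [Nx|nNx] := pselect (N x); [by left|right].
  by have [b' [h1 h2 h3]] := H x Cx bx Wx nNx; exists b'.
apply: countableU cN _; apply: bigcup_countable cI; exact: countableP.
Qed.

Definition big (C : set pt) b := ~ countable (C `&` box b).

Lemma big_ne C b : big C b -> exists x, C x /\ box b x.
Proof.
move=> hb; apply: contrapT => H; apply: hb.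
suff -> : C `&` box b = set0 by [].
by apply/seteqP; split => // x [Cx bx]; apply: H; exists x.
Qed.

Lemma shrink C b (d : R) : 0 < d -> big C b -> exists b', [/\ box b' `<=` box b,
  big C b' & forall y y', box b' y -> box b' y' -> forall i, `|y i - y' i| < d].
Proof.
move=> d0 hb.
have Hx : forall x, C x -> box b x -> setT x -> ~ set0 x -> exists b', [/\ box b' `<=` box b, box b' x &
   forall y y', box b' y -> box b' y' -> forall i, `|y i - y' i| < d].
  move=> x Cx bx _ _; have [|b'' [h1 h2]] := @rat_window x (d / 2); first by rewrite divr_gt0.
  exists (meet b b''); rewrite box_meet; split; [by move=> y []|by []|].
  move=> y y' [_ /h2 /= hy] [_ /h2 /= hy'] i.
  move: (hy i) (hy' i); rewrite !ltr_norml => /andP[u1 u2] /andP[u3 u4].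
  by apply/andP; split; lra.
have [b' [h1 h2 h3]] := @cover C setT set0 b _ (countable0 _) (ltac:(by rewrite setIT)) Hx.
by exists b'.
Qed.

Lemma avoid_pt C b (d : pt) : big C b ->
  exists b', [/\ box b' `<=` box b, big C b' & ~ box b' d].
Proof.
move=> hb.
have Hx : forall x, C x -> box b x -> setT x -> ~ [set d] x ->
    exists b', [/\ box b' `<=` box b, box b' x & ~ box b' d].
  move=> x Cx bx _ nxd.
  have [i hi] : exists i, x i != d i.
    apply: contrapT => H; apply: nxd; apply/funext => i.
    by apply: contrapT => h; apply: H; exists i; apply/eqP.
  have [|b'' [h1 h2]] := @rat_window x `|x i - d i|; first by rewrite normr_gt0 subr_eq0.
  exists (meet b b''); rewrite box_meet; split; [by move=> y []|by []|].
  move=> [_ /h2 /= /(_ i)]; by rewrite distrC ltxx.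
have [b' [h1 h2 h3]] := @cover C setT [set d] b _ (countable1 _) (ltac:(by rewrite setIT)) Hx.
by exists b'.
Qed.

Lemma Kne C b : big C b -> exists d, box b d /\
  forall e, 0 < e -> ~ countable (C `&` box b `&` cube d e).
Proof.
move=> hb; apply: contrapT => H.
have Hx : forall x, C x -> box b x -> setT x -> ~ set0 x ->
    exists b', [/\ box b' `<=` box b, box b' x & countable (C `&` box b')].
  move=> x Cx bx _ _.
  have [e [e0 ce]] : exists e, 0 < e /\ countable (C `&` box b `&` cube x e).
    apply: contrapT => H2; apply: H; exists x; split => // e e0 ce.
    by apply: H2; exists e.
  have [b'' [k1 k2]] := @rat_window x e e0.
  exists (meet b b''); rewrite box_meet; split; [by move=> y []|by []|].
  apply: (sub_countable _ ce); apply: subset_card_le => y [Cy [by1 /k2 /= by2]].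
  by split => // i; apply: ltW.
have [b' [h1 h2 h3]] := @cover C setT set0 b _ (countable0 _) (ltac:(by rewrite setIT)) Hx.
by [].
Qed.

Lemma avoid_set C b (d : pt) (dl : R) (E : set pt) : box b d ->
  (forall e, 0 < e -> ~ countable (C `&` box b `&` cube d e)) -> 0 < dl ->
  (forall y, cube d dl y -> ~ E y) ->
  exists b', [/\ box b' `<=` box b, big C b' & forall y, box b' y -> ~ E y].
Proof.
move=> bd hK dl0 hE.
have dl2 : 0 < dl / 2 by rewrite divr_gt0.
have Hx : forall x, C x -> box b x -> cube d (dl / 2) x -> ~ set0 x ->
    exists b', [/\ box b' `<=` box b, box b' x & forall y, box b' y -> ~ E y].
  move=> x Cx bx Wx _.
  have [b'' [k1 k2]] := @rat_window x (dl / 2) dl2.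
  exists (meet b b''); rewrite box_meet; split; [by move=> y []|by []|].
  move=> y [_ /k2 /= hy]; apply: hE => i.
  move: (hy i) (Wx i); rewrite ltr_norml ler_norml => /andP[u1 u2] /andP[u3 u4].
  by rewrite ler_norml; apply/andP; split; lra.
have [b' [h1 h2 h3]] := @cover C (cube d (dl / 2)) set0 b _ (countable0 _) (hK _ dl2) Hx.
by exists b'.
Qed.

End Boxes.
Arguments box {R m}. Arguments cube {R m}. Arguments big {R m}.

Lemma dep_seq (T : Type) (P : T -> Prop) (Rel : nat -> T -> T -> Prop) (x0 : T) :
  P x0 -> (forall k x, P x -> exists y, P y /\ Rel k x y) ->
  exists u : nat -> T, u 0%N = x0 /\ forall k, P (u k) /\ Rel k (u k) (u k.+1).
Proof.
move=> P0 H.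
have H' : forall k x, exists y, P x -> P y /\ Rel k x y.
  move=> k x; have [Px|nPx] := pselect (P x).
    by have [y hy] := H k x Px; exists y.
  by exists x.
pose nxt k x := sval (cid (H' k x)).
pose u := fix u k := if k is k'.+1 then nxt k' (u k') else x0.
have Pu : forall k, P (u k).
  by elim => //= k IH; exact: (svalP (cid (H' k (u k))) IH).1.
exists u; split => // k; split => //; exact: (svalP (cid (H' k (u k))) (Pu k)).2.
Qed.

Section Main.
Variables (R : realType) (m : nat).
Local Notation n := m.+2.
Local Notation pt := (pt R n).
Local Notation bx := (@box R m).

Lemma box_end (b b' : RB m) (y : pt) i : bx b' `<=` bx b -> bx b' y ->
  [/\ (ratr (b.1 i) <= ratr (b'.1 i) :> R), (ratr (b'.2 i) <= ratr (b.2 i) :> R)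
    & (ratr (b'.1 i) <= ratr (b'.2 i) :> R)].
Proof.
move=> sb hy; have /andP[y1 y2] := hy i.
have le12 : (ratr (b'.1 i) <= ratr (b'.2 i) :> R) by apply: le_trans y2.
pose z1 : pt := fun j => if j == i then ratr (b'.1 i) else y j.
pose z2 : pt := fun j => if j == i then ratr (b'.2 i) else y j.
have bz1 : bx b' z1.
  by move=> j; rewrite /z1; case: eqVneq => [->|_]; rewrite ?lexx ?le12 // hy.
have bz2 : bx b' z2.
  by move=> j; rewrite /z2; case: eqVneq => [->|_]; rewrite ?lexx ?le12 // hy.
have /andP[h1 _] := sb _ bz1 i; have /andP[_ h2] := sb _ bz2 i.
by move: h1 h2; rewrite /z1 /z2 eqxx.
Qed.

Lemma nested_limit (Q : nat -> RB m) :
  (forall k, bx (Q k.+1) `<=` bx (Q k)) -> (forall k, exists y : pt, bx (Q k) y) ->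
  exists x : pt, forall k, bx (Q k) x.
Proof.
move=> nest ne.
have sub : forall k j, (k <= j)%N -> bx (Q j) `<=` bx (Q k).
  move=> k j /subnK <-; elim: (j - k)%N => [|t IH]; first by rewrite add0n.
  by rewrite addSn; apply: subset_trans IH; apply: nest.
pose lo k i : R := ratr ((Q k).1 i).
pose hi k i : R := ratr ((Q k).2 i).
have lohi : forall k j i, lo k i <= hi j i.
  move=> k j i; pose M := maxn k j.
  have [y hy] := ne M.
  have [a1 _ a3] := box_end i (sub k M (leq_maxl _ _)) hy.
  have [_ b2 _] := box_end i (sub j M (leq_maxr _ _)) hy.
  by apply: (le_trans a1); apply: (le_trans a3).
pose x : pt := fun i => sup (range (fun k => lo k i)).
exists x => k i.
have hs : has_sup (range (fun k => lo k i)).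
  split; first by exists (lo 0%N i), 0%N.
  by exists (hi 0%N i) => _ [j _ <-]; apply: lohi.
apply/andP; split.
  by apply: sup_upper_bound => //; exists k.
apply: ge_sup; first by exists (lo 0%N i), 0%N.
by move=> _ [j _ <-]; apply: lohi.
Qed.

Lemma closure_pt (C A : set pt) (d : pt) : C `<=` @Ln R n `\` A -> closed_in_Ln C ->
  (forall e, 0 < e -> exists c, C c /\ forall i, `|c i - d i| <= e) -> C d.
Proof.
move=> CL hcl H.
have Ld : Ln d.
  rewrite /Ln /= lastcE; apply/eqP; rewrite -normr_le0.
  case: (leP `|d ord_max| 0) => // hd.
  have [c [Cc hc]] := H (`|d ord_max| / 2) (divr_gt0 hd (ltr0Sn _ 1)).
  have := (CL c Cc).1; rewrite /Ln /= lastcE => c0.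
  have := hc ord_max; rewrite c0 sub0r normrN => h; lra.
apply: hcl => // e e0.
have [dl dl0 hdl] := small_sq m (exprn_gt0 2 e0).
have [c [Cc hc]] := H dl dl0; exists c; split => //.
by rewrite edist_ltE //; apply: hdl.
Qed.

Lemma cont_tan (A : set pt) f (y : pt) eps : tau_cont A (@Xn R n) f -> Ln y -> ~ A y -> 0 < eps ->
  exists2 e, 0 < e & forall z, eball (raise y e) e z -> `|f z - f y| < eps.
Proof.
move=> fc Ly nAy e0.
have [U [hU hf]] := fc y (or_intror Ly) eps e0.
have Ly' : lastc y = 0 := Ly.
case: hU => [[Py _]|[[Ay _]|[_ _ [e [e0' UE]]]]].
- by move: Py; rewrite /Pn /= Ly' ltxx.
- by [].
- exists e => // z hz; apply: hf; first by rewrite UE; right.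
  by left; exact: tan_Pn e0' hz.
Qed.

End Main.

Theorem mainTheorem20 (R : realType) (n : nat) (A : set (pt R n)) :
  (2 <= n)%N -> A `<=` @Ln R n -> z_embedded A (@Ln R n) ->
  ~ (exists C : set (pt R n),
       [/\ C `<=` @Ln R n `\` A, closed_in_Ln C & ~ countable C]).
Proof.
case: n A => [|[|m]] A // _ AL hz [C [CL hcl nC]].
pose K (b : RB m) d := @box R m b d /\ forall e, 0 < e -> ~ countable (C `&` box b `&` cube d e).
have H0 : forall b : RB m, exists d, big C b -> K b d.
  move=> b; have [hb|nb] := pselect (big C b); last by exists (fun _ => 0) => /nb.
  by have [d hd] := Kne hb; exists d.
pose sel b := sval (cid (H0 b)).
have selK : forall b, big C b -> K b (sel b) := fun b => svalP (cid (H0 b)).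
pose D := [set d | exists b, big C b /\ d = sel b].
have KC : forall b d, K b d -> C d.
  move=> b d [bd hK]; apply: (closure_pt CL hcl) => e e0.
  have nc := hK e e0.
  have [c [[Cc _] ce]] : exists c, (C `&` box b `&` cube d e) c.
    apply: contrapT => H; apply: nc.
    suff -> : C `&` box b `&` cube d e = set0 by [].
    by apply/seteqP; split => // x hx; apply: H; exists x.
  by exists c.
have DC : D `<=` C by move=> d [b [hb ->]]; exact: KC (selK b hb).
pose g : pt R m.+2 -> R := fun y => if pselect (D y) then 0 else 1.
have gE : forall y, g y = 0 <-> D y.
  move=> y; rewrite /g; case: pselect => // nD; split => // /eqP; by rewrite oner_eq0.
have gc : tau_cont A (@Ln R m.+2) g.
  move=> y Ly eps e0.
  have [Ay|nAy] := pselect (A y).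
  - have nCy : ~ C y by move=> /CL [].
    have [e [e0' He]] : exists e, 0 < e /\ forall c, C c -> ~ edist c y < e.
      apply: contrapT => H; apply: nCy; apply: hcl => // e1 e1'.
      apply: contrapT => H2; apply: H; exists e1; split => // c Cc ce.
      by apply: H2; exists c.
    exists (eball y e `&` @Xn R m.+2); split.
      by right; left; split => //; exists e.
    move=> z [ze _] Lz.
    have nDz : ~ D z by move=> /DC Cz; exact: He z Cz ze.
    have nDy : ~ D y by move=> /DC.
    rewrite /g; case: (pselect (D z)) => [//|?]; case: (pselect (D y)) => [//|?].
    by rewrite subrr normr0.
  - exists (tball y 1); split.
      by right; right; split => //; exists 1.
    move=> z [->|zb] Lz; first by rewrite subrr normr0.
    have Lz' : lastc z = 0 := Lz.
    by have := tan_Pn ltr01 zb; rewrite /Pn /= Lz' ltxx.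
have [f [fc fz]] := hz g gc.
have fD : forall y, Ln y -> (f y = 0 <-> D y).
  by move=> y Ly; rewrite -gE; apply: fz.
pose E k := [set x | C x /\ ~ D x /\ exists r, (k.+1%:R)^-1 <= r /\
   forall z, eball (raise x r) r z -> (k.+1%:R)^-1 < `|f z| :> R].
have F1 : forall x, C x -> ~ D x -> exists k, E k x.
  move=> x Cx nDx; have [Lx nAx] := CL x Cx.
  have fx0 : f x != 0 by apply/eqP => /(fD x Lx).
  have a0 : 0 < `|f x| by rewrite normr_gt0.
  have a2 : 0 < `|f x| / 2 by rewrite divr_gt0.
  have [e e0 he] := cont_tan fc Lx nAx a2.
  have m0 : 0 < Num.min e (`|f x| / 2) by rewrite lt_min e0 a2.
  have [k hk] := archi_inv m0.
  move: hk; rewrite lt_min => /andP[hk1 hk2].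
  exists k; split => //; split => //; exists e; split; first exact: ltW.
  move=> z zb; have := he z zb.
  have := ler_normB (f z) (f z - f x); rewrite opprB addrC subrK => h1 h2.
  apply: (lt_trans hk2); lra.
have F3 : forall d k, D d -> exists2 dl, 0 < dl & forall y, cube d dl y -> ~ E k y.
  move=> d k Dd; have Cd := DC d Dd; have [Ld nAd] := CL d Cd.
  have fd0 : f d = 0 by apply/(fD d Ld).
  have k0 : 0 < (k.+1%:R)^-1 :> R by rewrite invr_gt0 ltr0n.
  have [p p0 hp] := cont_tan fc Ld nAd k0.
  have kp : 0 < p * (k.+1%:R)^-1 by rewrite mulr_gt0.
  have [dl dl0 hdl] := small_sq m kp.
  exists dl => // y hy [Cy [nDy [r [hr hz']]]].
  have sq1 := hdl y d hy.
  have Ly : lastc y = 0 := (CL y Cy).1.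
  have Ld' : lastc d = 0 := Ld.
  rewrite lastcE in Ly; rewrite lastcE in Ld'.
  have r0 : 0 < r := lt_le_trans k0 hr.
  have sq2 : sq y d < 4 * r * p.
    apply: (lt_le_trans sq1).
    have : p * (k.+1%:R)^-1 <= p * r by rewrite ler_pM2l.
    move=> h; apply: (le_trans h); nra.
  have [z [z1 z2]] := tan_meet r0 p0 Ly Ld' sq2.
  have := hz' z z1; have := hp z z2; rewrite fd0 subr0 => h1 h2.
  by have := lt_trans h2 h1; rewrite ltxx.
pose b00 : RB m := ([ffun => 0%R], [ffun => 0%R]).
pose dd j := sel (odflt b00 (unpickle j)).
have ddD : forall d, D d -> exists j, dd j = d.
  by move=> d [b [_ ->]]; exists (pickle b); rewrite /dd pickleK.
have step : forall k b, big C b -> exists b', big C b' /\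
    [/\ @box R m b' `<=` @box R m b,
        (forall y y' : pt R m.+2, box b' y -> box b' y' -> forall i, `|y i - y' i| < (k.+1%:R)^-1),
        ~ box b' (dd k) & forall y, box b' y -> ~ E k y].
  move=> k b hb; have [hbd hK] := selK b hb.
  have Dd : D (sel b) by exists b.
  have [dl dl0 hdl] := F3 _ k Dd.
  have [b1 [s1 g1 e1]] := avoid_set hbd hK dl0 hdl.
  have [b2 [s2 g2 e2]] := avoid_pt (dd k) g1.
  have k0 : 0 < (k.+1%:R)^-1 :> R by rewrite invr_gt0 ltr0n.
  have [b3 [s3 g3 e3]] := shrink k0 g2.
  exists b3; split => //; split => //.
  - by apply: (subset_trans s3); apply: (subset_trans s2).
  - by move=> /s3.
  - by move=> y /s3 /s2; exact: e1.
have [b0 hb0] : exists b, big C b.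
  apply: contrapT => H; apply: nC.
  apply: (@sub_countable _ _ _ (\bigcup_(b in [set: RB m]) (C `&` box b))).
    apply: subset_card_le => x Cx.
    have [b [bx _]] := rat_window x (ltr01 : 0 < 1 :> R).
    by exists b.
  apply: bigcup_countable; first exact: countableP.
  move=> b _; apply: contrapT => nb; apply: H; by exists b.
have [Q [Q0 HQ]] := dep_seq hb0 step.
have nest : forall k, box (Q k.+1) `<=` @box R m (Q k).
  by move=> k; case: (HQ k) => _ [].
have nonE : forall k, exists y : pt R m.+2, box (Q k) y.
  by move=> k; have [y [_ hy]] := big_ne (HQ k).1; exists y.
have [x hx] := nested_limit nest nonE.
have Cx : C x.
  apply: (closure_pt CL hcl) => e e0.
  have [k hk] := archi_inv e0.
  case: (HQ k) => _ [_ hs _ _].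
  have [c [Cc bc]] := big_ne (HQ k.+1).1.
  exists c; split => // i; apply: ltW; exact: lt_trans (hs c x bc (hx _) i) hk.
have nDx : ~ D x.
  move=> /ddD [j hj]; case: (HQ j) => _ [_ _ hn _]; apply: hn; rewrite hj; exact: hx.
have [k Ek] := F1 x Cx nDx.
by case: (HQ k) => _ [_ _ _ hE]; apply: (hE x (hx _)).
Qed.
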